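(* Let $X$ be a separable Banach space, $X\ne\{0\}$, and let $E_X$, $(e^X_n)$, $Q_X$ be as in the context. Let $(v_k)$ be a semi-normalized block sequence of $(e^X_n)$ such that $\|Q_X(v_k)\|_X\le 2^{-k}$ for every $k\in\mathbb{N}$. Then $(v_k)$ is equivalent to the standard unit vector basis of $c_0$.
   Context: Given a separable Banach space $X\neq\{0\}$ and a sequence $(x_n)$ (repetitions allowed) in the unit sphere of $X$ which is norm dense in the unit sphere, $E_X$ is the completion of $c_{00}(\mathbb{N})$ under the norm $\|z\|_{E_X}=\sup_{m\in\mathbb{N}}\|\sum_{n=0}^m z(n)x_n\|_X$; $(e^X_n)$ is the standard unit vector basis of $c_{00}(\mathbb{N})$ viewed in $E_X$ (a normalized monotone Schauder basis of $E_X$); $Q_X:E_X\to X$ is the unique bounded linear operator with $Q_X(e^X_n)=x_n$. A sequence is semi-normalized if its norms are bounded above and bounded away from $0$. *)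

(* Defs.v *)
From Stdlib Require Import Reals Lra ClassicalEpsilon.
Open Scope R_scope.

Record Banach := {
  B :> Type;
  bzero : B;
  badd : B -> B -> B;
  bopp : B -> B;
  bscale : R -> B -> B;
  bnorm : B -> R;
  badd_assoc : forall x y z, badd x (badd y z) = badd (badd x y) z;
  badd_comm : forall x y, badd x y = badd y x;
  badd_0 : forall x, badd x bzero = x;
  badd_opp : forall x, badd x (bopp x) = bzero;
  bscale_1 : forall x, bscale 1 x = x;
  bscale_assoc : forall a b x, bscale a (bscale b x) = bscale (a * b) x;
  bscale_addr : forall a x y, bscale a (badd x y) = badd (bscale a x) (bscale a y);
  bscale_addl : forall a b x, bscale (a + b) x = badd (bscale a x) (bscale b x);
  bnorm_eq0 : forall x, bnorm x = 0 -> x = bzero;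
  bnorm_scale : forall a x, bnorm (bscale a x) = Rabs a * bnorm x;
  bnorm_triangle : forall x y, bnorm (badd x y) <= bnorm x + bnorm y;
  bcomplete : forall u : nat -> B,
    (forall eps, 0 < eps -> exists N, forall m n, (N <= m)%nat -> (N <= n)%nat ->
        bnorm (badd (u m) (bopp (u n))) < eps) ->
    exists l, forall eps, 0 < eps -> exists N, forall n, (N <= n)%nat ->
        bnorm (badd (u n) (bopp l)) < eps
}.

Arguments bzero {_}.
Arguments badd {_}.
Arguments bopp {_}.
Arguments bscale {_}.
Arguments bnorm {_}.

Definition separable (X : Banach) : Prop :=
  exists d : nat -> X, forall y : X, forall eps, 0 < eps ->
    exists n, bnorm (badd y (bopp (d n))) < eps.

Definition dense_in_sphere (X : Banach) (x : nat -> X) : Prop :=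
  (forall n, bnorm (x n) = 1) /\
  (forall y : X, bnorm y = 1 -> forall eps, 0 < eps ->
     exists n, bnorm (badd y (bopp (x n))) < eps).

Definition finsupp (z : nat -> R) : Prop :=
  exists N, forall n, (N <= n)%nat -> z n = 0.

Fixpoint psum (X : Banach) (x : nat -> X) (z : nat -> R) (m : nat) : X :=
  match m with
  | O => bscale (z O) (x O)
  | S m' => badd (psum X x z m') (bscale (z (S m')) (x (S m')))
  end.

(* ||z||_{E_X} = sup_m || sum_{n=0}^m z(n) x_n ||_X  (chosen via epsilon as the lub) *)
Definition EXnorm (X : Banach) (x : nat -> X) (z : nat -> R) : R :=
  epsilon (inhabits 0)
    (fun r => is_lub (fun t => exists m, t = bnorm (psum X x z m)) r).

Definition QX (X : Banach) (x : nat -> X) (z : nat -> R) : X :=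
  epsilon (inhabits bzero)
    (fun y => exists N, forall m, (N <= m)%nat -> psum X x z m = y).

Definition block_seq (v : nat -> nat -> R) : Prop :=
  (forall k, exists n, v k n <> 0) /\
  exists p : nat -> nat, (forall k, (p k < p (S k))%nat) /\
    forall k n, ((n < p k)%nat \/ (p (S k) <= n)%nat) -> v k n = 0.

Definition semi_normalized (X : Banach) (x : nat -> X) (v : nat -> nat -> R) : Prop :=
  exists a b, 0 < a /\ forall k, a <= EXnorm X x (v k) <= b.

Fixpoint lincomb (a : nat -> R) (v : nat -> nat -> R) (K : nat) : nat -> R :=
  match K with
  | O => fun _ => 0
  | S K' => fun n => lincomb a v K' n + a K' * v K' n
  end.

(* c0 norm of sum_{k<K} a_k u_k : max_{k<K} |a_k| *)
Fixpoint maxabs (a : nat -> R) (K : nat) : R :=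
  match K with
  | O => 0
  | S K' => Rmax (maxabs a K') (Rabs (a K'))
  end.

Definition equiv_c0_basis (X : Banach) (x : nat -> X) (v : nat -> nat -> R) : Prop :=
  exists C, 0 < C /\ forall (a : nat -> R) (K : nat),
    / C * maxabs a K <= EXnorm X x (lincomb a v K) <= C * maxabs a K.

(* Main.v *)
Require Import Defs.
From Stdlib Require Import Reals Lra Lia ClassicalEpsilon Arith.
Open Scope R_scope.

Lemma b_cancel (X : Banach) (y : X) : badd y y = y -> y = bzero.
Proof.
  intro H. transitivity (badd (badd y y) (bopp y)).
  - rewrite <- badd_assoc, badd_opp, badd_0. reflexivity.
  - rewrite H. apply badd_opp.
Qed.

Lemma bscale0 (X : Banach) (y : X) : bscale 0 y = bzero.
Proof. apply b_cancel. rewrite <- bscale_addl. now rewrite Rplus_0_r. Qed.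

Lemma bscale_zero (X : Banach) (a : R) : bscale a (@bzero X) = bzero.
Proof.
  rewrite <- (bscale0 X bzero). rewrite bscale_assoc, Rmult_0_r. reflexivity.
Qed.

Lemma b0add (X : Banach) (y : X) : badd bzero y = y.
Proof. rewrite badd_comm. apply badd_0. Qed.

Lemma bnorm0 (X : Banach) : bnorm (@bzero X) = 0.
Proof. rewrite <- (bscale0 X bzero), bnorm_scale, Rabs_R0. ring. Qed.

Lemma bopp_scale (X : Banach) (y : X) : bopp y = bscale (-1) y.
Proof.
  assert (H : badd y (bscale (-1) y) = bzero).
  { rewrite <- (bscale_1 X y) at 1. rewrite <- bscale_addl.
    replace (1 + -1) with 0 by ring. apply bscale0. }
  rewrite <- (badd_0 X (bopp y)). rewrite <- H.
  rewrite badd_assoc. rewrite (badd_comm X (bopp y) y), badd_opp. apply b0add.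
Qed.

Lemma bnorm_opp (X : Banach) (y : X) : bnorm (bopp y) = bnorm y.
Proof. rewrite bopp_scale, bnorm_scale. replace (Rabs (-1)) with 1 by (rewrite Rabs_left; lra). ring. Qed.

Lemma bnorm_nonneg (X : Banach) (y : X) : 0 <= bnorm y.
Proof.
  pose proof (bnorm_triangle X y (bopp y)) as H.
  rewrite badd_opp, bnorm0, bnorm_opp in H. lra.
Qed.

Lemma badd_swap (X : Banach) (a b c d : X) :
  badd (badd a b) (badd c d) = badd (badd a c) (badd b d).
Proof.
  rewrite !badd_assoc. f_equal. rewrite <- !badd_assoc. f_equal. apply badd_comm.
Qed.

Lemma badd_sub (X : Banach) (q s : X) : badd (badd q s) (bopp q) = s.
Proof.
  rewrite (badd_comm X q s), <- badd_assoc, badd_opp. apply badd_0.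
Qed.

Lemma psum_lin (X : Banach) (x : nat -> X) (z1 z2 : nat -> R) (c : R) (m : nat) :
  psum X x (fun n => z1 n + c * z2 n) m = badd (psum X x z1 m) (bscale c (psum X x z2 m)).
Proof.
  induction m as [|m IH]; simpl.
  - rewrite bscale_addl, bscale_assoc. reflexivity.
  - rewrite IH, bscale_addr, bscale_addl, bscale_assoc. apply badd_swap.
Qed.

Lemma psum_zero (X : Banach) (x : nat -> X) (z : nat -> R) (m : nat) :
  (forall n, (n <= m)%nat -> z n = 0) -> psum X x z m = bzero.
Proof.
  induction m as [|m IH]; intro H; simpl.
  - rewrite H by lia. apply bscale0.
  - rewrite IH by (intros; apply H; lia). rewrite H by lia. rewrite bscale0. apply badd_0.
Qed.

Lemma psum_const (X : Banach) (x : nat -> X) (z : nat -> R) (N : nat) :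
  (forall n, (N < n)%nat -> z n = 0) -> forall m, (N <= m)%nat -> psum X x z m = psum X x z N.
Proof.
  intros H m Hm. induction Hm as [|m Hm IH]; [reflexivity|].
  simpl. rewrite H by lia. rewrite bscale0, badd_0. exact IH.
Qed.

Lemma psum_bdd_fin (X : Banach) (x : nat -> X) (z : nat -> R) (N : nat) :
  exists M, forall m, (m <= N)%nat -> bnorm (psum X x z m) <= M.
Proof.
  induction N as [|N [M IH]].
  - exists (bnorm (psum X x z 0)). intros m Hm. replace m with 0%nat by lia. lra.
  - exists (Rmax M (bnorm (psum X x z (S N)))). intros m Hm.
    destruct (Nat.eq_dec m (S N)) as [->|Hne].
    + apply Rmax_r.
    + eapply Rle_trans; [apply IH; lia|apply Rmax_l].
Qed.

Lemma EX_lub (X : Banach) (x : nat -> X) (z : nat -> R) :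
  (exists M, forall m, bnorm (psum X x z m) <= M) ->
  is_lub (fun t => exists m, t = bnorm (psum X x z m)) (EXnorm X x z).
Proof.
  intros [M HM]. unfold EXnorm. apply epsilon_spec.
  destruct (completeness (fun t => exists m, t = bnorm (psum X x z m))) as [l Hl].
  - exists M. intros t [m ->]. apply HM.
  - exists (bnorm (psum X x z 0)). exists 0%nat. reflexivity.
  - exists l. exact Hl.
Qed.

Lemma EX_ub (X : Banach) (x : nat -> X) (z : nat -> R) (M : R) :
  (forall m, bnorm (psum X x z m) <= M) -> EXnorm X x z <= M.
Proof.
  intro HM. destruct (EX_lub X x z (ex_intro _ M HM)) as [_ H].
  apply H. intros t [m ->]. apply HM.
Qed.

Lemma EX_ge (X : Banach) (x : nat -> X) (z : nat -> R) :
  (exists M, forall m, bnorm (psum X x z m) <= M) ->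
  forall m, bnorm (psum X x z m) <= EXnorm X x z.
Proof.
  intros HM m. destruct (EX_lub X x z HM) as [H _]. apply H. exists m; reflexivity.
Qed.

Lemma QX_eq (X : Banach) (x : nat -> X) (z : nat -> R) (N : nat) :
  (forall m, (N <= m)%nat -> psum X x z m = psum X x z N) ->
  QX X x z = psum X x z N.
Proof.
  intro H. unfold QX.
  destruct (epsilon_spec (inhabits bzero)
    (fun y => exists N, forall m, (N <= m)%nat -> psum X x z m = y)) as [N' HN'].
  - exists (psum X x z N), N. exact H.
  - rewrite <- (HN' (Nat.max N N')) by lia. apply H; lia.
Qed.

Lemma Lsucc (X : Banach) (x : nat -> X) a v K m :
  psum X x (lincomb a v (S K)) m =
  badd (psum X x (lincomb a v K) m) (bscale (a K) (psum X x (v K) m)).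
Proof. apply (psum_lin X x (lincomb a v K) (v K) (a K) m). Qed.

Lemma L0 (X : Banach) (x : nat -> X) a v m : psum X x (lincomb a v 0) m = bzero.
Proof. apply psum_zero. reflexivity. Qed.

Lemma p_mono (p : nat -> nat) : (forall k, (p k < p (S k))%nat) ->
  forall i k, (i <= k)%nat -> (p i <= p k)%nat.
Proof. intros hp i k H. induction H; [lia|]. specialize (hp m). lia. Qed.

Lemma maxabs_nonneg a K : 0 <= maxabs a K.
Proof. induction K; simpl. lra. eapply Rle_trans; [exact IHK|apply Rmax_l]. Qed.

Lemma maxabs_le a K c : 0 <= c -> (forall j, (j < K)%nat -> Rabs (a j) <= c) -> maxabs a K <= c.
Proof.
  intros Hc H. induction K; simpl; [lra|].
  apply Rmax_lub; [apply IHK; intros; apply H; lia | apply H; lia].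
Qed.

Lemma pow2_pos K : 0 < / 2 ^ K.
Proof. apply Rinv_0_lt_compat, pow_lt; lra. Qed.

Lemma pow2_S K : / 2 ^ S K = / 2 ^ K / 2.
Proof. simpl. rewrite Rinv_mult. unfold Rdiv. ring. Qed.

Lemma vzero (X : Banach) (x : nat -> X) (v : nat -> nat -> R) (p : nat -> nat)
  (hz : forall k n, ((n < p k)%nat \/ (p (S k) <= n)%nat) -> v k n = 0) k m :
  (S m <= p k)%nat -> psum X x (v k) m = bzero.
Proof. intro H. apply psum_zero. intros n Hn. apply hz. left; lia. Qed.

Lemma vconst (X : Banach) (x : nat -> X) (v : nat -> nat -> R) (p : nat -> nat)
  (hp : forall k, (p k < p (S k))%nat)
  (hz : forall k n, ((n < p k)%nat \/ (p (S k) <= n)%nat) -> v k n = 0) k m :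
  (p (S k) <= S m)%nat -> psum X x (v k) m = psum X x (v k) (pred (p (S k))).
Proof.
  intro H. apply psum_const; [|lia]. intros n Hn. apply hz. right. specialize (hp k). lia.
Qed.

Lemma upper (X : Banach) (x : nat -> X) (a : nat -> R) (v : nat -> nat -> R) (p : nat -> nat) (b : R)
  (hp : forall k, (p k < p (S k))%nat)
  (hz : forall k n, ((n < p k)%nat \/ (p (S k) <= n)%nat) -> v k n = 0)
  (hb0 : 0 <= b)
  (hb : forall k m, bnorm (psum X x (v k) m) <= b)
  (hQ : forall k m, (p (S k) <= S m)%nat -> bnorm (psum X x (v k) m) <= / 2 ^ k) :
  forall K m, bnorm (psum X x (lincomb a v K) m) <= maxabs a K * (2 + b) /\
    ((p K <= S m)%nat -> bnorm (psum X x (lincomb a v K) m) <= maxabs a K * (2 - 2 * / 2 ^ K)).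
Proof.
  induction K as [|K IH]; intro m.
  - rewrite L0, bnorm0. simpl. split; [lra|intros; lra].
  - destruct (IH m) as [IH1 IH2].
    rewrite Lsucc.
    set (f := bnorm (psum X x (lincomb a v K) m)) in *.
    set (P := psum X x (v K) m).
    assert (Htri : bnorm (badd (psum X x (lincomb a v K) m) (bscale (a K) P)) <= f + Rabs (a K) * bnorm P).
    { eapply Rle_trans; [apply bnorm_triangle|]. rewrite bnorm_scale. unfold f; lra. }
    assert (HM1 : maxabs a K <= maxabs a (S K)) by (simpl; apply Rmax_l).
    assert (HM2 : Rabs (a K) <= maxabs a (S K)) by (simpl; apply Rmax_r).
    pose proof (maxabs_nonneg a K) as HM0.
    pose proof (pow2_pos K) as Ht.
    assert (Ht1 : / 2 ^ K <= 1).
    { rewrite <- Rinv_1. apply Rinv_le_contravar; [lra|]. apply pow_R1_Rle. lra. }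
    pose proof (pow2_S K) as HtS.
    pose proof (Rabs_pos (a K)) as Ha0.
    pose proof (bnorm_nonneg X P) as HP0.
    set (M := maxabs a K) in *. set (M' := maxabs a (S K)) in *.
    set (t := / 2 ^ K) in *. rewrite HtS.
    assert (Hb2 : Rabs (a K) * bnorm P <= M' * b).
    { apply Rmult_le_compat; auto; apply hb. }
    assert (HMb : M * (2 + b) <= M' * (2 + b)) by (apply Rmult_le_compat_r; lra).
    destruct (le_lt_dec (S m) (p K)) as [H1|H1].
    + assert (HP : P = bzero) by (apply (vzero X x v p hz); exact H1).
      rewrite HP, bnorm0, Rmult_0_r in Htri. rewrite HP in *.
      split; [lra|]. intro H. specialize (hp K). lia.
    + assert (Hf : f <= M * (2 - 2 * t)) by (apply IH2; lia).
      assert (HMf : M * (2 - 2 * t) <= M' * (2 - 2 * t)) by (apply Rmult_le_compat_r; lra).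
      destruct (le_lt_dec (p (S K)) (S m)) as [H2|H2].
      * assert (HPq : bnorm P <= t) by (apply hQ; exact H2).
        assert (Hq : Rabs (a K) * bnorm P <= M' * t) by (apply Rmult_le_compat; auto).
        assert (HMt : M' * (2 - 2 * (t / 2)) = M' * (2 - 2 * t) + M' * t) by (field).
        assert (0 <= M' * t) by (apply Rmult_le_pos; lra).
        assert (0 <= M') by lra.
        assert (M' * (2 - 2 * (t / 2)) <= M' * (2 + b)).
        { apply Rmult_le_compat_l; lra. }
        split; intros; lra.
      * assert (M * (2 - 2 * t) <= M' * 2).
        { apply Rle_trans with (M' * (2 - 2 * t)); [exact HMf|].
          apply Rmult_le_compat_l; lra. }
        split; [|intro; lia].
        assert (M' * (2 + b) = M' * 2 + M' * b) by ring. lra.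
Qed.

Lemma Lconst (X : Banach) (x : nat -> X) (a : nat -> R) (v : nat -> nat -> R) (p : nat -> nat)
  (hp : forall k, (p k < p (S k))%nat)
  (hz : forall k n, ((n < p k)%nat \/ (p (S k) <= n)%nat) -> v k n = 0) :
  forall j m m', (p j <= S m)%nat -> (p j <= S m')%nat ->
  psum X x (lincomb a v j) m = psum X x (lincomb a v j) m'.
Proof.
  induction j as [|j IH]; intros m m' H H'.
  - rewrite !L0. reflexivity.
  - rewrite !Lsucc. pose proof (hp j).
    rewrite (IH m m') by lia.
    rewrite (vconst X x v p hp hz j m H), (vconst X x v p hp hz j m' H'). reflexivity.
Qed.

Lemma Lhigh (X : Banach) (x : nat -> X) (a : nat -> R) (v : nat -> nat -> R) (p : nat -> nat)
  (hp : forall k, (p k < p (S k))%nat)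
  (hz : forall k n, ((n < p k)%nat \/ (p (S k) <= n)%nat) -> v k n = 0) :
  forall j K m, (j < K)%nat -> (S m <= p (S j))%nat ->
  psum X x (lincomb a v K) m = psum X x (lincomb a v (S j)) m.
Proof.
  intros j K m HK Hm. induction HK as [|K HK IH]; [reflexivity|].
  rewrite Lsucc, IH. rewrite (vzero X x v p hz K m).
  - rewrite bscale_zero. apply badd_0.
  - pose proof (p_mono p hp (S j) K HK). lia.
Qed.

Lemma lower_pt (X : Banach) (x : nat -> X) (a : nat -> R) (v : nat -> nat -> R) (p : nat -> nat)
  (hp : forall k, (p k < p (S k))%nat)
  (hz : forall k n, ((n < p k)%nat \/ (p (S k) <= n)%nat) -> v k n = 0)
  (K : nat) (E : R) (hE : forall m, bnorm (psum X x (lincomb a v K) m) <= E) :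
  forall j, (j < K)%nat -> forall m, Rabs (a j) * bnorm (psum X x (v j) m) <= 2 * E.
Proof.
  intros j HjK.
  assert (HE0 : 0 <= E) by (eapply Rle_trans; [apply bnorm_nonneg|apply (hE 0%nat)]).
  assert (Hin : forall m, (p j <= S m)%nat -> (S m <= p (S j))%nat ->
            Rabs (a j) * bnorm (psum X x (v j) m) <= 2 * E).
  { intros m H1 H2.
    assert (HW : bnorm (psum X x (lincomb a v j) m) <= E).
    { destruct j as [|j'].
      - rewrite L0, bnorm0. exact HE0.
      - pose proof (hp j').
        set (m0 := pred (p (S j'))).
        assert (Hm0 : psum X x (lincomb a v K) m0 = psum X x (lincomb a v (S j')) m).
        { rewrite (Lhigh X x a v p hp hz (S j') K m0 HjK) by (pose proof (hp (S j')); unfold m0; lia).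
          rewrite Lsucc, (vzero X x v p hz (S j') m0) by (unfold m0; lia).
          rewrite bscale_zero, badd_0. apply (Lconst X x a v p hp hz); unfold m0; lia. }
        rewrite <- Hm0. apply hE. }
    rewrite <- bnorm_scale.
    assert (Heq : bscale (a j) (psum X x (v j) m) =
       badd (psum X x (lincomb a v K) m) (bopp (psum X x (lincomb a v j) m))).
    { rewrite (Lhigh X x a v p hp hz j K m HjK H2), Lsucc. symmetry. apply badd_sub. }
    rewrite Heq. eapply Rle_trans; [apply bnorm_triangle|]. rewrite bnorm_opp.
    specialize (hE m). lra. }
  intro m.
  destruct (le_lt_dec (S m) (p j)) as [H1|H1].
  - rewrite (vzero X x v p hz j m H1), bnorm0, Rmult_0_r. lra.
  - destruct (le_lt_dec (S m) (p (S j))) as [H2|H2].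
    + apply Hin; lia.
    + pose proof (hp j).
      rewrite (vconst X x v p hp hz j m) by lia. apply Hin; lia.
Qed.

Theorem proposition17 (X : Banach) (x : nat -> X) (v : nat -> nat -> R) :
  separable X ->
  (exists y : X, y <> bzero) ->
  dense_in_sphere X x ->
  block_seq v ->
  semi_normalized X x v ->
  (forall k, bnorm (QX X x (v k)) <= / 2 ^ k) ->
  equiv_c0_basis X x v.
Proof.
  intros _ _ _ [_ [p [hp hz]]] [a0 [b [ha0 hab]]] hQX.
  assert (vbdd : forall k, exists M, forall m, bnorm (psum X x (v k) m) <= M).
  { intro k. destruct (psum_bdd_fin X x (v k) (pred (p (S k)))) as [M HM].
    exists M. intro m. pose proof (hp k) as Hpk.
    destruct (le_lt_dec m (pred (p (S k)))) as [H|H].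
    - apply HM; exact H.
    - rewrite (vconst X x v p hp hz k m) by lia. apply HM; lia. }
  assert (hb : forall k m, bnorm (psum X x (v k) m) <= b).
  { intros k m. eapply Rle_trans; [apply EX_ge, vbdd|apply hab]. }
  assert (hb0 : 0 <= b) by (destruct (hab 0%nat); lra).
  assert (hQ : forall k m, (p (S k) <= S m)%nat -> bnorm (psum X x (v k) m) <= / 2 ^ k).
  { intros k m H. pose proof (hp k).
    rewrite (vconst X x v p hp hz k m H).
    rewrite <- (QX_eq X x (v k) (pred (p (S k)))). apply hQX.
    intros m' Hm'. apply (vconst X x v p hp hz). lia. }
  exists (Rmax (2 / a0) (2 + b)).
  assert (HC1 : 2 / a0 <= Rmax (2 / a0) (2 + b)) by apply Rmax_l.
  assert (HC2 : 2 + b <= Rmax (2 / a0) (2 + b)) by apply Rmax_r.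
  assert (HC0 : 0 < Rmax (2 / a0) (2 + b)) by lra.
  split; [exact HC0|]. intros a K.
  set (C := Rmax (2 / a0) (2 + b)) in *.
  pose proof (upper X x a v p b hp hz hb0 hb hQ K) as HU.
  assert (HU' : forall m, bnorm (psum X x (lincomb a v K) m) <= maxabs a K * (2 + b))
    by (intro m; apply (HU m)).
  set (E := EXnorm X x (lincomb a v K)).
  assert (HE : forall m, bnorm (psum X x (lincomb a v K) m) <= E)
    by (apply EX_ge; eexists; exact HU').
  assert (HEub : E <= maxabs a K * (2 + b)) by (apply EX_ub; exact HU').
  pose proof (maxabs_nonneg a K) as HM0.
  assert (HE0 : 0 <= E) by (eapply Rle_trans; [apply bnorm_nonneg|apply (HE 0%nat)]).
  assert (Hlow : maxabs a K <= 2 * E / a0).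
  { apply maxabs_le.
    - unfold Rdiv. apply Rmult_le_pos; [lra|]. left; apply Rinv_0_lt_compat; lra.
    - intros j Hj. pose proof (lower_pt X x a v p hp hz K E HE j Hj) as Hl.
      destruct (Req_dec (a j) 0) as [Ha|Ha].
      + rewrite Ha, Rabs_R0. unfold Rdiv. apply Rmult_le_pos; [lra|]. left; apply Rinv_0_lt_compat; lra.
      + assert (Hpos : 0 < Rabs (a j)) by (apply Rabs_pos_lt; exact Ha).
        assert (Hv : EXnorm X x (v j) <= 2 * E / Rabs (a j)).
        { apply EX_ub. intro m. specialize (Hl m).
          apply (Rmult_le_reg_l (Rabs (a j))); [exact Hpos|].
          unfold Rdiv. replace (Rabs (a j) * (2 * E * / Rabs (a j))) with (2 * E) by (field; lra).
          exact Hl. }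
        destruct (hab j) as [Ha0 _].
        assert (H1 : a0 * Rabs (a j) <= 2 * E).
        { apply Rle_trans with (2 * E / Rabs (a j) * Rabs (a j)).
          - apply Rmult_le_compat_r; lra.
          - right. field. lra. }
        apply (Rmult_le_reg_l a0); [exact ha0|].
        replace (a0 * (2 * E / a0)) with (2 * E) by (field; lra). exact H1. }
  split.
  - apply (Rmult_le_reg_l C); [exact HC0|].
    rewrite <- Rmult_assoc, Rinv_r by lra. rewrite Rmult_1_l.
    apply Rle_trans with (2 / a0 * E).
    + replace (2 / a0 * E) with (2 * E / a0) by (field; lra). exact Hlow.
    + apply Rmult_le_compat_r; lra.
  - apply Rle_trans with (maxabs a K * (2 + b)); [exact HEub|].
    rewrite Rmult_comm. apply Rmult_le_compat_r; lra.
Qed.
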